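(* Let $0<\alpha<1$, $\sigma>0$, $N_1$ a positive integer, $h=\sigma^2\alpha^2$, $T=\sigma\alpha\sqrt{N_1}$, $\kappa=\frac\alpha{1-\alpha}$, and let $n\ge1$ be an integer. For $x\in(0,1]$ and complex $u\notin(-\infty,0]$ let $$f(u,x)=\frac{\sin(\alpha\pi)}{\alpha\pi}\frac{1}{2\sqrt u}\frac{xe^{\sqrt u-T}}{e^{\frac1\alpha(\sqrt u-T)}+x}$$ (principal branch of $\sqrt u$). Let $u^*=\frac{1+(1-2\alpha)\sqrt{4\alpha-4\alpha^2+1}}{2(1-\alpha)^2}$, $\gamma=\alpha\log\!\Big(\frac{\frac1\kappa\sqrt{u^*}+1}{\sqrt{u^*}-1}\Big)+\sqrt{u^*}$, $x^*=e^{\frac1\alpha(\gamma-T)}$, $M_0=2\max\left\{\frac{\sigma^2}{4},1+\mathrm{ceil}\!\left(\frac{9\pi^2}{\sigma^2}\right),2\,\mathrm{ceil}\!\left[\left(1+\sqrt{\pi/\sigma}\right)^4\right]\right\}$, and $\Upsilon=\{x\in[x^*,1]:(T+\alpha\log x)^2-\alpha^2\pi^2>M_0h\}$. For $x\in\Upsilon$ put $a=2\alpha\pi(T+\alpha\log x)$. Then $$\left|\int_0^{2a}\big[f(h+it,x)-f(h-it,x)\big]e^{-\frac{2n\pi}{h}t}\,\mathrm{d}t\right|=\left(\frac{e^h}{h^2}\int_0^1te^{-\frac{2n\pi}{h}t}\,\mathrm{d}t+\frac{e^{\sqrt h}}{\sqrt h}\int_1^{+\infty}\frac{e^{\sqrt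 t}}{\sqrt t}e^{-\frac{2n\pi}{h}t}\,\mathrm{d}t\right)\mathcal{O}(e^{-T})$$ uniformly for $x\in\Upsilon$, with the constant in the $\mathcal{O}$ term independent of $T$, $n$, $x$, $h$, $\alpha$ and $\sigma$.
   Context: $\mathrm{ceil}(y)$ is the least integer $\ge y$. *)

(* Defs.v *)
From Stdlib Require Import Reals.
From Coquelicot Require Import Coquelicot.
Open Scope R_scope.

(* ceil y = least integer >= y.  Stdlib's [up r] is the unique integer with
   r < up r <= r + 1, so up r - 1 = floor r and ceil y = - floor (- y). *)
Definition ceilR (y : R) : R := - (IZR (up (- y)) - 1).

Definition Cexp (z : C) : C :=
  (exp (Re z) * cos (Im z), exp (Re z) * sin (Im z)).

(* principal branch of the complex square root (Re >= 0, and Re > 0 off (-oo,0]) *)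
Definition Csqrt (z : C) : C :=
  (sqrt ((Cmod z + Re z) / 2),
   (if Rle_dec 0 (Im z) then 1 else -1) * sqrt ((Cmod z - Re z) / 2)).

Section Params.
Variables (alpha sigma : R) (N1 : nat).

Definition hh : R := sigma ^ 2 * alpha ^ 2.
Definition TT : R := sigma * alpha * sqrt (INR N1).
Definition kappa : R := alpha / (1 - alpha).

Definition fA (u : C) (x : R) : C :=
  RtoC (sin (alpha * PI) / (alpha * PI)) *
  / (RtoC 2 * Csqrt u) *
  (RtoC x * Cexp (Csqrt u - RtoC TT)) /
  (Cexp (RtoC (/ alpha) * (Csqrt u - RtoC TT)) + RtoC x).

Definition ustar : R :=
  (1 + (1 - 2 * alpha) * sqrt (4 * alpha - 4 * alpha ^ 2 + 1)) /
  (2 * (1 - alpha) ^ 2).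

Definition gammaA : R :=
  alpha * ln ((/ kappa * sqrt ustar + 1) / (sqrt ustar - 1)) + sqrt ustar.

Definition xstar : R := exp (/ alpha * (gammaA - TT)).

Definition M0 : R :=
  2 * Rmax (sigma ^ 2 / 4)
           (Rmax (1 + ceilR (9 * PI ^ 2 / sigma ^ 2))
                 (2 * ceilR ((1 + sqrt (PI / sigma)) ^ 4))).

Definition Upsilon (x : R) : Prop :=
  xstar <= x <= 1 /\
  (TT + alpha * ln x) ^ 2 - alpha ^ 2 * PI ^ 2 > M0 * hh.

Definition aA (x : R) : R := 2 * alpha * PI * (TT + alpha * ln x).

End Params.

(* Main.v *)
Require Import Defs.
From Stdlib Require Import Reals.
From Coquelicot Require Import Coquelicot.
From Stdlib Require Import Lra Psatz Classical.
Open Scope R_scope.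

Lemma Lub_all : forall E : R -> Prop, (forall x, E x) -> Lub_Rbar E = p_infty.
Proof.
  intros E HE. apply is_lub_Rbar_unique. split.
  - intros x _. simpl. exact I.
  - intros l Hl. destruct l as [l| |]; simpl; auto.
    + specialize (Hl (l+1) (HE _)). simpl in Hl. lra.
    + specialize (Hl 0 (HE _)). simpl in Hl. auto.
Qed.

Lemma RInt_gen_nonneg_any : forall (f : R -> R) ,
  (forall t, 1 <= t -> 0 <= f t) ->
  0 <= RInt_gen f (at_point 1) (Rbar_locally p_infty).
Proof.
  intros f Hf.
  destruct (classic (ex_RInt_gen f (at_point 1) (Rbar_locally p_infty))) as [He|Hn].
  - assert (H := RInt_gen_correct f He).
    assert (H0 := is_RInt_gen_scal f 0 _ H).
    assert (Hn := fun A B => @RInt_gen_norm R_CompleteNormedModule _ _ _ _ (fun y => scal 0 (f y)) f 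
       (scal 0 (RInt_gen f (at_point 1) (Rbar_locally p_infty))) _ A B H0 H).
    assert (Hz: forall u : R, scal 0 u = 0) by (intros; unfold scal; simpl; unfold mult; simpl; ring).
    rewrite Hz in Hn.
    replace 0 with (@norm R_AbsRing R_NormedModule (@zero R_NormedModule)) at 1
      by (rewrite norm_zero; reflexivity).
    apply Hn; clear Hn.
    + apply Filter_prod with (fun x => x = 1) (fun y => 1 < y). reflexivity. exists 1. intros; auto.
      intros x y -> Hy. simpl. lra.
    + apply Filter_prod with (fun x => x = 1) (fun y => 1 < y). reflexivity. exists 1. intros; auto.
      intros x y -> Hy z Hzz. simpl in Hzz. rewrite Hz. change (Rabs 0 <= f z). rewrite Rabs_R0. apply Hf. lra.
  - unfold RInt_gen, iota. simpl. unfold lim. simpl. unfold R_complete_lim.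
    rewrite Lub_all. simpl; lra.
    intros x y Hy. exfalso. apply Hn. exists y. exact Hy.
Qed.

Lemma RInt_C_nonex : forall (f : R -> C) a b,
  ~ ex_RInt (V:=C_R_CompleteNormedModule) f a b -> @RInt C_R_CompleteNormedModule f a b = (0,0).
Proof.
  intros f a b Hn. unfold RInt, iota. simpl. unfold lim. simpl. unfold C_complete_lim, R_complete_lim.
  rewrite !Lub_all. reflexivity.
  all: intros x y Hy; exfalso; apply Hn; exists y; exact Hy.
Qed.

Lemma is_RInt_texp : forall k b, 0 < k ->
  is_RInt (fun t => t * exp (- k * t)) 0 b (1/k^2 - (b/k + 1/k^2) * exp(-k*b)).
Proof.
  intros k b Hk.
  assert (H := is_RInt_derive (fun t => - (t/k + 1/k^2) * exp (-k*t)) (fun t => t * exp (- k * t)) 0 b).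
  replace (1/k^2 - (b/k + 1/k^2) * exp(-k*b)) with
     (minus ((fun t => - (t/k + 1/k^2) * exp (-k*t)) b) ((fun t => - (t/k + 1/k^2) * exp (-k*t)) 0)).
  apply H.
  - intros x _. auto_derive. auto. field. lra.
  - intros x _. apply (@ex_derive_continuous R_AbsRing R_NormedModule (fun t => t * exp(-k*t))). auto_derive. auto.
  - simpl. unfold minus, plus, opp; simpl. rewrite Rmult_0_r, exp_0. field. lra.
Qed.
Definition G (A x T al : R) (s : C) : C :=
  RtoC A * / (RtoC 2 * s) * (RtoC x * Cexp (s - RtoC T)) /
  (Cexp (RtoC (/ al) * (s - RtoC T)) + RtoC x).

Lemma Gform : forall A x T al r y, 0 < r -> 0 < al ->
  let P := exp (r - T) in let E := exp ((r - T)/al) in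
  let c1 := cos y in let s1 := sin y in let c2 := cos (y/al) in let s2 := sin (y/al) in
  let Q1 := E*c2 + x in let Q2 := E * s2 in
  Q1^2 + Q2^2 <> 0 ->
  G A x T al (r,y) = (A*x*P*(r*(c1*Q1 + s1*Q2) + y*(s1*Q1 - c1*Q2)) / (2*(r^2+y^2)*(Q1^2+Q2^2)),
                      A*x*P*(r*(s1*Q1 - c1*Q2) - y*(c1*Q1 + s1*Q2)) / (2*(r^2+y^2)*(Q1^2+Q2^2))).
Proof.
  intros A x T al r y Hr Hal P E c1 s1 c2 s2 Q1 Q2 HQ.
  unfold G, Cexp, Cdiv, Cminus, Cmult, Cinv, Cplus, Copp, RtoC, Re, Im; simpl.
  replace (/ al * (r + - T) - 0 * (y + - 0)) with ((r-T)/al) by (field; lra).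
  replace (/ al * (y + - 0) + 0 * (r + - T)) with (y/al) by (field; lra).
  replace (r + - T) with (r - T) by ring.
  replace (y + - 0) with y by ring.
  fold P E c1 s1 c2 s2.
  assert (Hry : r^2 + y^2 <> 0) by (intro; nra).
  fold Q1 Q2 in HQ.
  apply injective_projections; simpl.
  all: unfold Q1, Q2 in *; clearbody P E c1 s1 c2 s2.
  all: field; split; [ | split]; try nra.
Qed.

Lemma Gdiff : forall A x T al r y, 0 < r -> 0 < al ->
  let P := exp (r - T) in let E := exp ((r - T)/al) in
  let c1 := cos y in let s1 := sin y in let c2 := cos (y/al) in let s2 := sin (y/al) in
  let Q1 := E*c2 + x in let Q2 := E * s2 in
  Q1^2 + Q2^2 <> 0 ->
  Cmod (G A x T al (r,y) - G A x T al (r,-y)) =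
    2 * Rabs (A*x*P*(r*(s1*Q1 - c1*Q2) - y*(c1*Q1 + s1*Q2)) / (2*(r^2+y^2)*(Q1^2+Q2^2))).
Proof.
  intros A x T al r y Hr Hal P E c1 s1 c2 s2 Q1 Q2 HQ.
  assert (HQ' : (E * cos (-y/al) + x)^2 + (E * sin (-y/al))^2 <> 0).
  { replace (-y/al) with (-(y/al)) by (field; lra). rewrite cos_neg, sin_neg. fold c2 s2.
    unfold Q1, Q2 in HQ. intro; apply HQ. nra. }
  rewrite (Gform A x T al r y Hr Hal HQ).
  rewrite (Gform A x T al r (-y) Hr Hal HQ').
  replace (-y/al) with (-(y/al)) by (field; lra). rewrite cos_neg, sin_neg, cos_neg, sin_neg.
  fold P E c1 s1 c2 s2. fold Q1.
  assert (Hry : r^2 + y^2 <> 0) by (intro; nra).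
  unfold Cminus, Cplus, Copp, Cmod; simpl.
  unfold Q1, Q2 in *; clearbody P E c1 s1 c2 s2.
  match goal with |- sqrt (?a * (?a * 1) + ?b * (?b * 1)) = _ =>
    replace a with 0 by (field; split; try nra);
    replace b with (2 * (A * x * P * (r * (s1 * (E * c2 + x) - c1 * (E * s2)) - y * (c1 * (E * c2 + x) + s1 * (E * s2))) /
      (2 * (r ^ 2 + y ^ 2) * ((E * c2 + x) ^ 2 + (E * s2) ^ 2)))) by (field; split; try nra) end.
  rewrite Rmult_0_l, Rplus_0_l, Rmult_1_r.
  match goal with |- sqrt (?b * ?b) = _ => change (b*b) with (Rsqr b) end.
  rewrite sqrt_Rsqr_abs, Rabs_mult, (Rabs_right 2) by lra. reflexivity.
Qed.

Lemma Gbound_real : forall A x al r y P E c1 s1 c2 s2,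
  0 <= A <= 1 -> 0 < x -> 0 < al -> 0 < r -> 0 <= y -> 0 < P -> 0 <= E -> 2*E <= x ->
  r*E <= 7*al*x ->
  Rabs (s1*c2 - c1*s2) <= y/al -> Rabs s1 <= y -> Rabs c1 <= 1 -> Rabs (c1*c2 + s1*s2) <= 1 ->
  -1 <= c2 -> c2^2 + s2^2 = 1 ->
  let Q1 := E*c2 + x in let Q2 := E * s2 in
  2 * Rabs (A*x*P*(r*(s1*Q1 - c1*Q2) - y*(c1*Q1 + s1*Q2)) / (2*(r^2+y^2)*(Q1^2+Q2^2)))
   <= 4*P*y*(r+9)/r^2.
Proof.
  intros A x al r y P E c1 s1 c2 s2 HA Hx Hal Hr Hy HP HE HEx HrE Hu Hs1 Hc1 Hv Hc2 Hcs Q1 Q2.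
  set (u := s1*c2 - c1*s2) in *. set (v := c1*c2 + s1*s2) in *.
  assert (HN : Rabs (r*(s1*Q1 - c1*Q2) - y*(c1*Q1 + s1*Q2)) <= x*y*(r+9)).
  { replace (r*(s1*Q1 - c1*Q2) - y*(c1*Q1 + s1*Q2)) with (r*(E*u + x*s1) - y*(E*v + x*c1))
      by (unfold u, v, Q1, Q2; ring).
    set (w := y/al) in *.
    assert (Hw : r*E*w <= 7*x*y).
    { unfold w. replace (r*E*(y/al)) with ((r*E)*y/al) by (field; lra).
      apply Rle_div_l. lra. nra. }
    apply Rabs_le_between in Hu. apply Rabs_le_between in Hs1. apply Rabs_le_between in Hc1.
    apply Rabs_le_between in Hv.
    assert (0 <= r*E) by nra.
    assert (0 <= r*E*(w-u)) by (apply Rmult_le_pos; lra).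
    assert (0 <= r*E*(w+u)) by (apply Rmult_le_pos; lra).
    assert (0 <= r*x*(y-s1)) by (apply Rmult_le_pos; nra).
    assert (0 <= r*x*(y+s1)) by (apply Rmult_le_pos; nra).
    assert (0 <= y*E*(1+v)) by (apply Rmult_le_pos; nra).
    assert (0 <= y*E*(1-v)) by (apply Rmult_le_pos; nra).
    assert (0 <= y*x*(1+c1)) by (apply Rmult_le_pos; nra).
    assert (0 <= y*x*(1-c1)) by (apply Rmult_le_pos; nra).
    assert (y*E <= x*y/2) by nra.
    apply Rabs_le. split; nra. }
  assert (HQ : Q1^2 + Q2^2 >= x^2/4).
  { unfold Q1, Q2.
    replace ((E*c2+x)^2 + (E*s2)^2) with (E^2*(c2^2+s2^2) + 2*E*x*c2 + x^2) by ring.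
    rewrite Hcs. assert (0 <= E*x*(c2+1)) by (apply Rmult_le_pos; nra). nra. }
  assert (HD : 0 < 2*(r^2+y^2)*(Q1^2+Q2^2)).
  { apply Rmult_lt_0_compat. nra. nra. }
  rewrite Rabs_div by lra. rewrite (Rabs_right (2*(r^2+y^2)*(Q1^2+Q2^2))) by lra.
  rewrite Rabs_mult, (Rabs_right (A*x*P)) by (apply Rle_ge; apply Rmult_le_pos; [apply Rmult_le_pos|]; lra).
  set (N := Rabs (r * (s1 * Q1 - c1 * Q2) - y * (c1 * Q1 + s1 * Q2))) in *.
  assert (0 <= N) by apply Rabs_pos.
  set (D := 2*(r^2+y^2)*(Q1^2+Q2^2)) in *.
  assert (HB : 2 * (A*x*P*N) <= 4*P*y*(r+9)/r^2 * D).
  { unfold D. 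
    assert (H1: A*x*P*N <= x*P*(x*y*(r+9))).
    { apply Rle_trans with (1*x*P*N). 
      apply Rmult_le_compat_r. lra. apply Rmult_le_compat_r. lra. apply Rmult_le_compat_r; lra.
      replace (1*x*P*N) with (x*P*N) by ring. apply Rmult_le_compat_l. nra. exact HN. }
    assert (H2: 4*P*y*(r+9)/r^2 * (2*(r^2+y^2)*(Q1^2+Q2^2)) >= 4*P*y*(r+9)/r^2 * (2*r^2*(x^2/4))).
    { apply Rle_ge. apply Rmult_le_compat_l.
      apply Rle_div_r. nra. rewrite Rmult_0_l. nra.
      apply Rmult_le_compat. nra. nra. nra. lra. }
    assert (H3 : 4*P*y*(r+9)/r^2 * (2*r^2*(x^2/4)) = 2 * (x*P*(x*y*(r+9)))) by (field; lra).
    lra. }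
  replace (2 * (A * x * P * N / D)) with (2 * (A*x*P*N)/D) by (field; lra).
  apply Rle_div_l. lra. exact HB.
Qed.
Lemma polyb : forall w, 0 <= w -> 8*(w^2+9*w)*(30+w^4) <= 100000 * (1 + w^2/8)^4.
Proof. intros w Hw.
  assert (H1 := pow2_ge_0 (w-1)).
  assert (0 <= w^2*(w-1)^2) by (apply Rmult_le_pos; [apply pow2_ge_0|auto]).
  assert (0 <= w^4*(w-1)^2) by (apply Rmult_le_pos; [apply pow_le; auto|auto]).
  assert (0 <= w^3) by (apply pow_le; auto). assert (0 <= w^5) by (apply pow_le; auto).
  assert (0<= w^6) by (apply pow_le; auto). assert (0 <= w^8) by (apply pow_le; auto).
  assert (0 <= w^4) by (apply pow_le; auto).
  nra.
Qed.

Lemma exp_1_ge : 9/4 <= exp 1.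
Proof.
  replace 1 with (1/2 + 1/2) by field. rewrite exp_plus.
  assert (H := exp_ineq1_le (1/2)). nra.
Qed.

Lemma J_bound : forall h c, 0 < h -> 6/h <= c -> 3/(30+h^2) <= 1 - (1+c)*exp(-c).
Proof.
  intros h c Hh Hc.
  assert (Hc0 : 0 < c) by (apply Rlt_le_trans with (6/h); [apply Rdiv_lt_0_compat; lra | exact Hc]).
  rewrite exp_Ropp. set (E := exp c).
  assert (HE : 0 < E) by apply exp_pos.
  assert (H30 : 0 < 30 + h^2) by nra.
  destruct (Rle_lt_dec 1 c) as [H1|H1].
  - assert (HEc : 9/4*c <= E).
    { unfold E. replace c with (1 + (c-1)) by ring. rewrite exp_plus.
      assert (H := exp_ineq1_le (c-1)). assert (H' := exp_1_ge).
      assert (0 < exp (c-1)) by apply exp_pos. nra. }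
    assert (Hq : (1+c)*/E <= 8/9).
    { apply Rmult_le_reg_r with E. lra. rewrite Rmult_assoc, Rinv_l by lra. nra. }
    assert (3/(30+h^2) <= 1/10).
    { apply Rmult_le_reg_r with (30+h^2). lra. unfold Rdiv. rewrite Rmult_assoc, Rinv_l by lra. nra. }
    lra.
  - assert (HEc : 1 + c + c^2/4 <= E).
    { unfold E. replace (exp c) with (exp (c/2 + c/2)) by (f_equal; field). rewrite exp_plus.
      assert (H := exp_ineq1_le (c/2)). nra. }
    assert (HE3 : E <= 3).
    { unfold E. apply Rle_trans with (exp 1). destruct (Req_dec c 1). subst; lra.
      left. apply exp_increasing. lra. apply exp_le_3. }
    assert (Hcc : 36/h^2 <= c^2).
    { replace (36/h^2) with ((6/h)^2) by (field; lra). 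
      assert (0 < 6/h) by (apply Rdiv_lt_0_compat; lra). nra. }
    assert (Hq : 1 - (1+c)*/E >= c^2/12).
    { replace (1 - (1+c)*/E) with ((E - 1 - c)/E) by (field; lra).
      apply Rle_ge. apply (Rle_div_r (c^2/12) (E-1-c) E); [lra|nra]. }
    assert (3/(30+h^2) <= 3/h^2).
    { apply Rmult_le_compat_l. lra. apply Rinv_le_contravar. apply pow_lt; lra. lra. }
    assert (3/h^2 <= c^2/12).
    { replace (3/h^2) with ((36/h^2)/12) by (field; lra). lra. }
    lra.
Qed.

Lemma final_exp : forall h, 0 < h ->
  8*(h+9*sqrt h)*(30+h^2)*exp(sqrt h + h/24) <= 300000*exp h.
Proof.
  intros h Hh. set (w := sqrt h).
  assert (Hw : 0 <= w) by apply sqrt_pos.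
  assert (Hhw : h = w^2) by (unfold w; rewrite pow2_sqrt; lra).
  rewrite Hhw.
  replace (exp (w^2)) with (exp (w + w^2/24) * exp (23*w^2/24 - w))
    by (rewrite <- exp_plus; f_equal; field).
  assert (H1 : exp (w^2/2 - 1) <= exp (23*w^2/24 - w)).
  { destruct (Req_dec (w^2/2 - 1) (23*w^2/24 - w)) as [e|ne]. rewrite e; lra.
    left. apply exp_increasing. assert (0 <= (w - 12/11)^2) by apply pow2_ge_0. nra. }
  assert (H2 : (1 + w^2/8)^4 / 3 <= exp (w^2/2 - 1)).
  { replace (w^2/2 - 1) with (w^2/8 + w^2/8 + w^2/8 + w^2/8 + (- (1))) by field.
    rewrite !exp_plus. rewrite exp_Ropp.
    assert (H := exp_ineq1_le (w^2/8)).
    assert (0 <= w^2/8) by (assert (0 <= w^2) by apply pow2_ge_0; lra).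
    assert (He := exp_le_3). assert (0 < exp 1) by apply exp_pos.
    set (q := exp (w^2/8)) in *.
    assert (0 <= (1 + w^2/8)^4) by (apply pow_le; lra).
    apply Rle_trans with (q*q*q*q/3).
    - assert (Hp : (1 + w^2/8)^4 <= q^4) by (apply pow_incr; lra).
      replace (q*q*q*q) with (q^4) by ring. lra.
    - unfold Rdiv. apply Rmult_le_compat_l. assert (0 <= q) by (unfold q; left; apply exp_pos). nra.
      apply Rinv_le_contravar; lra. }
  assert (H3 := polyb w Hw).
  assert (H4 : 0 < exp (w + w^2/24)) by apply exp_pos.
  assert (H5 : 8 * (w ^ 2 + 9 * w) * (30 + (w ^ 2) ^ 2) <= 300000 * exp (23 * w ^ 2 / 24 - w)).
  { replace ((w^2)^2) with (w^4) by ring. lra. }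
  assert (H6 := Rmult_le_compat_r _ _ _ (Rlt_le _ _ H4) H5).
  replace (sqrt (w^2)) with w by (rewrite sqrt_pow2; auto).
  lra.
Qed.
Lemma ceil_ge : forall y, y <= ceilR y.
Proof. intros y. unfold ceilR. destruct (archimed (-y)) as [H1 H2]. lra. Qed.

Lemma M0_ge4 : forall s, 0 < s -> 4 <= M0 s.
Proof.
  intros s Hs. unfold M0.
  assert (H : 1 <= (1 + sqrt (PI / s))^4).
  { apply pow_R1_Rle. assert (H := sqrt_pos (PI/s)). lra. }
  assert (H' := ceil_ge ((1 + sqrt (PI / s))^4)).
  assert (H3 := Rmax_r (1 + ceilR (9 * PI ^ 2 / s ^ 2)) (2 * ceilR ((1 + sqrt (PI / s)) ^ 4))).
  assert (H4 := Rmax_r (s^2/4) (Rmax (1 + ceilR (9 * PI ^ 2 / s ^ 2)) (2 * ceilR ((1 + sqrt (PI / s)) ^ 4)))).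
  lra.
Qed.

Lemma M0_sig : forall s, 0 < s -> 18*PI^2 <= M0 s * s^2.
Proof.
  intros s Hs. unfold M0.
  assert (H' := ceil_ge (9 * PI ^ 2 / s ^ 2)).
  assert (H3 := Rmax_l (1 + ceilR (9 * PI ^ 2 / s ^ 2)) (2 * ceilR ((1 + sqrt (PI / s)) ^ 4))).
  assert (H4 := Rmax_r (s^2/4) (Rmax (1 + ceilR (9 * PI ^ 2 / s ^ 2)) (2 * ceilR ((1 + sqrt (PI / s)) ^ 4)))).
  assert (Hs2 : 0 < s^2) by (apply pow_lt; lra).
  assert (E : 9 * PI ^ 2 / s ^ 2 * s^2 = 9*PI^2) by (field; lra).
  assert (HP : 0 < PI^2) by (apply pow_lt; apply PI_RGT_0).
  set (m := Rmax (s ^ 2 / 4) (Rmax (1 + ceilR (9 * PI ^ 2 / s ^ 2)) (2 * ceilR ((1 + sqrt (PI / s)) ^ 4)))) in *.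
  assert (9*PI^2/s^2 <= m) by lra.
  assert (9*PI^2/s^2*s^2 <= m*s^2) by (apply Rmult_le_compat_r; lra).
  lra.
Qed.

Lemma gamma_nonneg : forall al, 0 < al < 1 -> 0 <= gammaA al.
Proof.
  intros al Hal. unfold gammaA, kappa.
  set (v := sqrt (ustar al)).
  assert (Hv : 0 <= v) by apply sqrt_pos.
  assert (Hik : / (al / (1 - al)) = (1-al)/al) by (field; lra).
  rewrite Hik.
  set (Q := ((1 - al) / al * v + 1) / (v - 1)).
  assert (Hnum : 0 < (1 - al) / al * v + 1).
  { assert (0 <= (1-al)/al) by (apply Rle_mult_inv_pos; lra). nra. }
  destruct (Rle_lt_dec Q 0) as [HQ|HQ].
  - unfold ln. destruct (Rlt_dec 0 Q). exfalso; lra. lra.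
  - assert (Hv1 : 1 < v).
    { destruct (Rtotal_order v 1) as [H|[H|H]]; auto.
      + exfalso. unfold Q in HQ. assert (/ (v-1) < 0) by (apply Rinv_lt_0_compat; lra).
        assert (((1 - al) / al * v + 1) * / (v - 1) < 0).
        { assert (0 < ((1 - al) / al * v + 1) * (- / (v - 1))) by (apply Rmult_lt_0_compat; lra). lra. }
        unfold Rdiv at 1 in HQ. lra.
      + exfalso. unfold Q in HQ. rewrite H in HQ. replace (1-1) with 0 in HQ by ring.
        unfold Rdiv in HQ. rewrite Rinv_0, Rmult_0_r in HQ. lra. }
    assert (Hl : 1 - / Q <= ln Q).
    { assert (H := exp_ineq1_le (- ln Q)). rewrite exp_Ropp, exp_ln in H by lra. lra. }
    assert (HiQ : / Q = (v-1)/((1 - al) / al * v + 1)).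
    { unfold Q. rewrite Rinv_div. reflexivity. }
    rewrite HiQ in Hl.
    assert (Hk : al * ((v - 1) / ((1 - al) / al * v + 1)) <= al + v).
    { set (k := (1-al)/al) in *.
      assert (Hk : al * k = 1 - al) by (unfold k; field; lra).
      assert (0 <= k) by (unfold k; apply Rle_mult_inv_pos; lra).
      replace (al * ((v - 1) / (k * v + 1))) with ((al * (v-1)) / (k*v+1)) by (field; lra).
      apply (Rle_div_l (al*(v-1)) (al+v) (k*v+1)). lra.
      assert (0 <= k*v*v) by (apply Rmult_le_pos; [apply Rmult_le_pos|]; lra).
      nra. }
    assert (al * (1 - (v - 1) / ((1 - al) / al * v + 1)) <= al * ln Q) by (apply Rmult_le_compat_l; lra).
    lra.
Qed.
Lemma Csqrt_pos : forall h t, 0 < h -> 0 <= t ->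
  let m := sqrt (h^2 + t^2) in
  Csqrt (h,t) = (sqrt ((m+h)/2), sqrt ((m-h)/2)) /\
  Csqrt (h,-t) = (sqrt ((m+h)/2), - sqrt ((m-h)/2)).
Proof.
  intros h t Hh Ht m.
  assert (Hm : Cmod (h,t) = m) by reflexivity.
  assert (Hm' : Cmod (h,-t) = m) by (unfold Cmod, m; simpl; f_equal; ring).
  split.
  - unfold Csqrt. rewrite Hm. simpl. destruct (Rle_dec 0 t). f_equal; ring. lra.
  - unfold Csqrt. rewrite Hm'. simpl. destruct (Rle_dec 0 (-t)).
    + assert (t = 0) by lra. subst t.
      assert (m = h). { unfold m. replace (h^2 + 0^2) with (h^2) by ring. apply sqrt_pow2. lra. }
      rewrite H. replace ((h-h)/2) with 0 by field. rewrite sqrt_0. f_equal; ring.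
    + f_equal; ring.
Qed.
Lemma Rabs_sin_le : forall z, Rabs (sin z) <= Rabs z.
Proof.
  assert (Hp : forall z, 0 < z -> Rabs (sin z) <= z).
  { intros z Hz. assert (H1 := sin_lt_x z Hz). assert (H2 := SIN_bound z).
    apply Rabs_le. split; [|lra].
    destruct (Rle_lt_dec 1 z). lra.
    assert (0 < sin z) by (apply sin_gt_0; [lra| assert (H := PI_RGT_0); assert (H3 := PI2_3_2) ; lra]).
    lra. }
  intros z. destruct (Rtotal_order z 0) as [H|[H|H]].
  - rewrite <- (Ropp_involutive z). rewrite sin_neg, Rabs_Ropp, Rabs_Ropp.
    rewrite (Rabs_right (-z)) by lra. apply Hp. lra.
  - subst. rewrite sin_0, Rabs_R0. lra.
  - rewrite (Rabs_right z) by lra. apply Hp. lra.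
Qed.

Lemma pw : forall A x T al h L t c,
  0 <= A <= 1 -> 0 < al < 1 -> 0 < x -> 0 < h -> L = T + al * ln x -> 0 < L ->
  4*al*PI < L -> 4*h < L^2 -> 0 <= t <= 4*al*PI*L -> 0 < c -> 1/(4*c) <= h/24 ->
  Cmod ((G A x T al (Csqrt (h,t)) - G A x T al (Csqrt (h,-t))) * RtoC (exp (- c * t)))
   <= 2*(1/h + 9/(h*sqrt h))*exp(sqrt h + h/24 - T) * (t * exp (- (c/2) * t)).
Proof.
  intros A x T al h L t c HA Hal Hx Hh HL HL0 HaL HhL Ht Hc Hc4.
  destruct (Csqrt_pos h t Hh (proj1 Ht)) as [E1 E2].
  set (m := sqrt (h^2+t^2)) in *.
  set (r := sqrt ((m+h)/2)) in *. set (y := sqrt ((m-h)/2)) in *.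
  rewrite E1, E2. clear E1 E2.
  assert (Hm1 : h <= m).
  { unfold m. rewrite <- (sqrt_pow2 h) at 1 by lra. apply sqrt_le_1_alt. nra. }
  assert (Hm2 : m <= h + t).
  { unfold m. rewrite <- (sqrt_pow2 (h+t)) by lra. apply sqrt_le_1_alt. nra. }
  assert (Hmm : m^2 = h^2 + t^2) by (unfold m; rewrite pow2_sqrt; nra).
  assert (Hr2 : r^2 = (m+h)/2) by (unfold r; rewrite pow2_sqrt; lra).
  assert (Hy2 : y^2 = (m-h)/2) by (unfold y; rewrite pow2_sqrt; lra).
  assert (Hr0 : 0 <= r) by apply sqrt_pos.
  assert (Hy0 : 0 <= y) by apply sqrt_pos.
  set (sh := sqrt h).
  assert (Hsh : sh^2 = h) by (unfold sh; rewrite pow2_sqrt; lra).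
  assert (Hsh0 : 0 < sh) by (unfold sh; apply sqrt_lt_R0; lra).
  assert (Hrh : sh <= r) by (destruct (Rle_lt_dec sh r); auto; nra).
  assert (Hr : 0 < r) by lra.
  assert (Hry : r*y = t/2).
  { assert (Hsq : (r*y)^2 = (t/2)^2).
    { replace ((r*y)^2) with (r^2*y^2) by ring. rewrite Hr2, Hy2. nra. }
    assert (0 <= r*y) by (apply Rmult_le_pos; lra).
    destruct (Rtotal_order (r*y) (t/2)) as [Hq|[Hq|Hq]]; auto; nra. }
  assert (Hr78 : r < 7*L/8).
  { assert (r^2 < 49*L^2/64).
    { rewrite Hr2. assert (al*PI*L < L^2/4) by nra. nra. }
    destruct (Rle_lt_dec (7*L/8) r); auto. nra. }
  set (z := (L - r)/al).
  assert (Hz1 : 1 <= z).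
  { unfold z. apply (Rle_div_r 1 (L-r) al). lra. assert (H3 := PI2_3_2). nra. }
  assert (HE : exp ((r - T)/al) = x * exp (-z)).
  { rewrite <- (exp_ln x) at 1 by lra. rewrite <- exp_plus. f_equal. unfold z. rewrite HL. field. lra. }
  assert (Hez : 0 < exp z) by apply exp_pos.
  assert (Hez1 := exp_ineq1_le z).
  assert (Hemz : exp (-z) = / exp z) by apply exp_Ropp.
  assert (HE2 : 2 * exp ((r-T)/al) <= x).
  { rewrite HE, Hemz. replace (2 * (x * / exp z)) with (2*x / exp z) by (field; lra).
    apply (Rle_div_l (2*x) x (exp z)). lra. nra. }
  assert (HE7 : r * exp ((r-T)/al) <= 7*al*x).
  { rewrite HE, Hemz. replace (r * (x * / exp z)) with (r*x / exp z) by (field; lra).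
    apply (Rle_div_l (r*x) (7*al*x) (exp z)). lra.
    assert (r <= 7*al*z) by (unfold z; replace (7*al*((L-r)/al)) with (7*(L-r)) by (field; lra); lra).
    assert (0 < al*x) by nra. 
    assert (r*x <= 7*al*z*x) by (apply Rmult_le_compat_r; lra).
    assert (7*al*z*x <= 7*al*x*exp z) by (assert (z <= exp z) by lra; nra). lra. }
  set (E := exp ((r-T)/al)) in *.
  assert (HE0 : 0 < E) by apply exp_pos.
  assert (Hcs : (cos (y/al))^2 + (sin (y/al))^2 = 1).
  { rewrite <- (sin2_cos2 (y/al)). unfold Rsqr. ring. }
  assert (Hc2 := COS_bound (y/al)).
  assert (HQ : (E * cos (y/al) + x)^2 + (E * sin (y/al))^2 <> 0).
  { replace ((E * cos (y/al) + x)^2 + (E * sin (y/al))^2) with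
      (E^2*((cos (y/al))^2 + (sin (y/al))^2) + 2*E*x*cos (y/al) + x^2) by ring.
    rewrite Hcs. assert (0 <= E*x*(cos (y/al) + 1)) by (apply Rmult_le_pos; nra). nra. }
  rewrite Cmod_mult, Cmod_R, (Rabs_right (exp _)) by (apply Rle_ge; left; apply exp_pos).
  rewrite (Gdiff A x T al r y Hr (proj1 Hal) HQ).
  fold E.
  assert (HB := Gbound_real A x al r y (exp (r - T)) E (cos y) (sin y) (cos (y/al)) (sin (y/al))
     HA Hx (proj1 Hal) Hr Hy0 (exp_pos _) (Rlt_le _ _ HE0) HE2 HE7).
  assert (Ht1 : Rabs (sin y * cos (y / al) - cos y * sin (y / al)) <= y / al).
  { rewrite <- sin_minus. eapply Rle_trans. apply Rabs_sin_le.
    assert (y/al >= y) by (apply Rle_ge; apply (Rle_div_r y y al); nra).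
    apply Rabs_le. split; [|nra].
    assert (0 <= y/al) by (apply Rle_mult_inv_pos; lra). lra. }
  assert (Ht2 : Rabs (sin y) <= y).
  { eapply Rle_trans. apply Rabs_sin_le. rewrite Rabs_right; lra. }
  assert (Ht3 : Rabs (cos y) <= 1) by (apply Rabs_le; apply COS_bound).
  assert (Ht4 : Rabs (cos y * cos (y / al) + sin y * sin (y / al)) <= 1).
  { rewrite <- cos_minus. apply Rabs_le; apply COS_bound. }
  specialize (HB Ht1 Ht2 Ht3 Ht4 (proj1 Hc2) Hcs). cbv zeta in HB.
  eapply Rle_trans. apply Rmult_le_compat_r. left; apply exp_pos. exact HB.
  assert (Hyt : y = t/(2*r)) by (apply (Rmult_eq_reg_l r); [rewrite Hry; field|]; lra).
  assert (Hb : (r+9)/r^3 <= 1/h + 9/(h*sh)).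
  { assert (1/r^2 <= 1/h).
    { unfold Rdiv. rewrite !Rmult_1_l. apply Rinv_le_contravar. lra. lra. }
    assert (9/r^3 <= 9/(h*sh)).
    { unfold Rdiv. apply Rmult_le_compat_l. lra. apply Rinv_le_contravar.
      apply Rmult_lt_0_compat; lra. rewrite <- Hsh. 
      replace (r^3) with (r*r*r) by ring. replace (sh^2*sh) with (sh*sh*sh) by ring.
      apply Rmult_le_compat; try nra. }
    replace ((r+9)/r^3) with (1/r^2 + 9/r^3) by (field; lra). lra. }
  set (w := sqrt (t/2)).
  assert (Hw2 : w^2 = t/2) by (unfold w; rewrite pow2_sqrt; lra).
  assert (Hw0 : 0 <= w) by apply sqrt_pos.
  assert (Hrw : r <= sh + w).
  { assert (r^2 <= (sh+w)^2) by nra.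
    destruct (Rle_lt_dec r (sh+w)); auto. nra. }
  assert (Hwc : w <= 1/(4*c) + c*t/2).
  { assert (0 <= c*(w - 1/(2*c))^2) by (apply Rmult_le_pos; [lra|apply pow2_ge_0]).
    replace (c*(w - 1/(2*c))^2) with (c*w^2 - w + 1/(4*c)) in H by (field; lra).
    rewrite Hw2 in H. lra. }
  assert (Hexp : exp (r - T) * exp (- c * t) <= exp (sh + h/24 - T) * exp (- (c/2) * t)).
  { rewrite <- !exp_plus. destruct (Req_dec (r - T + - c * t) (sh + h / 24 - T + - (c / 2) * t)) as [e|ne].
    rewrite e; lra. left; apply exp_increasing. lra. }
  rewrite Hyt. clear Hyt.
  replace (4 * exp (r - T) * (t / (2 * r)) * (r + 9) / r ^ 2 * exp (- c * t)) with
     (2 * t * ((r+9)/r^3) * (exp (r - T) * exp (- c * t))) by (field; lra).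
  replace (2 * (1 / h + 9 / (h * sh)) * exp (sh + h / 24 - T) * (t * exp (- (c / 2) * t))) with
     (2 * t * (1 / h + 9 / (h * sh)) * (exp (sh + h / 24 - T) * exp (- (c / 2) * t))) by ring.
  clearbody w E z sh y r m.
  apply Rmult_le_compat.
  - assert (0 <= (r+9)/r^3). { apply Rle_mult_inv_pos. lra. apply pow_lt. exact Hr. } apply Rmult_le_pos; [lra|assumption].
  - left; apply Rmult_lt_0_compat; apply exp_pos.
  - apply Rmult_le_compat_l. lra. exact Hb.
  - exact Hexp.
Qed.
Lemma Ufacts : forall al s N1 x, 0 < al < 1 -> 0 < s -> Upsilon al s N1 x ->
  0 < x /\ x <= 1 /\ 0 < TT al s N1 + al * ln x /\ 4*al*PI < TT al s N1 + al * ln x /\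
  4 * hh al s < (TT al s N1 + al * ln x)^2.
Proof.
  intros al s N1 x Hal Hs [[Hx1 Hx2] HM].
  remember (TT al s N1 + al * ln x) as L eqn:HLdef.
  assert (Hxs : 0 < xstar al s N1) by (unfold xstar; apply exp_pos).
  assert (Hx : 0 < x) by lra.
  assert (Hln : / al * (gammaA al - TT al s N1) <= ln x).
  { rewrite <- (ln_exp (/ al * (gammaA al - TT al s N1))). apply ln_le. apply exp_pos. exact Hx1. }
  assert (Hg : gammaA al - TT al s N1 <= al * ln x).
  { replace (gammaA al - TT al s N1) with (al * (/ al * (gammaA al - TT al s N1))) by (field; lra).
    apply Rmult_le_compat_l; lra. }
  assert (HL0 : 0 <= L) by (assert (H := gamma_nonneg al Hal); lra).
  assert (HM4 := M0_ge4 s Hs). assert (HM18 := M0_sig s Hs).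
  assert (Hh : 0 < hh al s) by (unfold hh; apply Rmult_lt_0_compat; apply pow_lt; lra).
  assert (H1 : 4 * hh al s <= M0 s * hh al s) by (apply Rmult_le_compat_r; lra).
  assert (H2 : 18*PI^2*al^2 <= M0 s * hh al s).
  { unfold hh. replace (M0 s * (s^2*al^2)) with ((M0 s * s^2) * al^2) by ring.
    apply Rmult_le_compat_r. apply pow2_ge_0. exact HM18. }
  assert (HP : 0 < PI) by apply PI_RGT_0.
  assert (Hpa : 0 < al * PI) by (apply Rmult_lt_0_compat; lra).
  assert (HL2 : (4*al*PI)^2 < L^2) by nra.
  assert (HL : 0 < L).
  { destruct HL0 as [|e]; auto. exfalso. rewrite <- e in HL2. assert (0 <= (4*al*PI)^2) by apply pow2_ge_0. replace (0^2) with 0 in HL2 by ring. lra. }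
  assert (0 <= al^2*PI^2) by (apply Rmult_le_pos; apply pow2_ge_0).
  split; [lra|]. split; [lra|]. split; [lra|]. split; [|lra].
  destruct (Rle_lt_dec L (4*al*PI)); auto. nra.
Qed.

Lemma final_ineq : forall h c T, 0 < h -> 6/h <= c ->
  2*(1/h + 9/(h*sqrt h))*exp(sqrt h + h/24 - T) / (c/2)^2 <=
  exp h / h^2 * (1/c^2 - (1/c + 1/c^2)*exp(-c*1)) * (300000*exp(-T)).
Proof.
  intros h c T Hh Hc.
  assert (Hc0 : 0 < c) by (apply Rlt_le_trans with (6/h); [apply Rdiv_lt_0_compat; lra | exact Hc]).
  assert (HJ := J_bound h c Hh Hc).
  assert (HF := final_exp h Hh).
  set (sh := sqrt h) in *.
  assert (Hsh : sh^2 = h) by (unfold sh; rewrite pow2_sqrt; lra).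
  assert (Hsh0 : 0 < sh) by (unfold sh; apply sqrt_lt_R0; lra).
  clearbody sh.
  rewrite Rmult_1_r.
  replace (1/c^2 - (1/c + 1/c^2)*exp(-c)) with ((1 - (1+c)*exp(-c))/c^2) by (field; lra).
  replace (exp (sh + h/24 - T)) with (exp (sh + h/24) * exp (-T)) by (rewrite <- exp_plus; f_equal; ring).
  set (J := 1 - (1+c)*exp(-c)) in *.
  set (X := exp (sh + h/24)) in *. set (Y := exp h) in *. set (Z := exp (-T)).
  assert (HX : 0 < X) by apply exp_pos. assert (HY : 0 < Y) by apply exp_pos.
  assert (HZ : 0 < Z) by apply exp_pos.
  clearbody J X Y Z.
  assert (H30 : 0 < 30 + h^2) by nra.
  assert (HJ' : 3 <= J * (30 + h^2)).
  { apply (Rle_div_l 3 J (30+h^2)) in HJ. lra. lra. }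
  subst h.
  set (h := sh^2) in *.
  replace (2 * (1 / h + 9 / (h * sh)) * (X * Z) / (c / 2) ^ 2) with
    ((8 * (h + 9*sh) * X) * (Z / (h^2 * c^2))) by (unfold h; field; repeat split; lra).
  replace (Y / h ^ 2 * (J / c ^ 2) * (300000 * Z)) with
    ((300000 * Y * J) * (Z / (h^2*c^2))) by (unfold h; field; repeat split; lra).
  apply Rmult_le_compat_r.
  { apply Rle_mult_inv_pos. lra. apply Rmult_lt_0_compat; apply pow_lt; lra. }
  assert (Hh9 : 0 < 8*(h+9*sh)) by lra.
  assert (H1 : 8 * (h + 9 * sh) * X * 3 <= 8 * (h + 9 * sh) * X * (J * (30 + h ^ 2))).
  { apply Rmult_le_compat_l. apply Rmult_le_pos; lra. exact HJ'. }
  assert (HJ0 : 0 < J) by (apply Rlt_le_trans with (3/(30+h^2)); [apply Rdiv_lt_0_compat; lra| exact HJ]).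
  assert (H2 : 8 * (h + 9 * sh) * (30 + h ^ 2) * X * J <= 300000 * Y * J).
  { apply Rmult_le_compat_r. lra. exact HF. }
  assert (H3 : 8 * (h + 9 * sh) * X * (J * (30 + h ^ 2)) = 8 * (h + 9 * sh) * (30 + h ^ 2) * X * J) by ring.
  assert (0 <= 300000 * Y * J) by (apply Rmult_le_pos; lra).
  lra.
Qed.

Theorem lemmaA1 :
  exists C0 : R, 0 < C0 /\
  forall (alpha sigma : R) (N1 n : nat) (x : R),
    0 < alpha < 1 -> 0 < sigma -> (1 <= N1)%nat -> (1 <= n)%nat ->
    Upsilon alpha sigma N1 x ->
    let h := hh alpha sigma in
    let T := TT alpha sigma N1 in
    let a := aA alpha sigma N1 x in
    Cmod (@RInt C_R_CompleteNormedModule (fun t : R =>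
                  ((fA alpha sigma N1 (h, t) x - fA alpha sigma N1 (h, (- t)%R) x)
                   * RtoC (exp (- (2 * INR n * PI / h) * t)))%C) 0 (2 * a))
    <= ( exp h / h ^ 2 *
           RInt (fun t => t * exp (- (2 * INR n * PI / h) * t)) 0 1
       + exp (sqrt h) / sqrt h *
           RInt_gen (fun t => exp (sqrt t) / sqrt t * exp (- (2 * INR n * PI / h) * t))
                    (at_point 1) (Rbar_locally p_infty) )
       * (C0 * exp (- T)).
Proof.
  exists 300000. split. lra.
  intros al s N1 n x Hal Hs HN1 Hn HU h T a.
  destruct (Ufacts al s N1 x Hal Hs HU) as (Hx & Hx1 & HL0 & HaL & HhL).
  fold T h in HL0, HaL, HhL.
  assert (Hh : 0 < h) by (unfold h, hh; apply Rmult_lt_0_compat; apply pow_lt; lra).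
  assert (Hn1 : 1 <= INR n) by (apply (le_INR 1); exact Hn).
  assert (HP3 := PI2_3_2).
  set (c := 2 * INR n * PI / h).
  assert (Hc6 : 6/h <= c).
  { unfold c. apply Rmult_le_compat_r. left; apply Rinv_0_lt_compat; lra. nra. }
  assert (Hc0 : 0 < c) by (apply Rlt_le_trans with (6/h); [apply Rdiv_lt_0_compat; lra | exact Hc6]).
  assert (Hc4 : 1/(4*c) <= h/24).
  { unfold c. replace (1 / (4 * (2 * INR n * PI / h))) with (h / (8 * INR n * PI)) by (field; repeat split; lra).
    unfold Rdiv. apply Rmult_le_compat_l. lra. apply Rinv_le_contravar. lra. nra. }
  set (L := T + al * ln x) in *.
  assert (Ha : 2 * a = 4*al*PI*L) by (unfold a, aA, L, T; ring).
  set (A := sin (al*PI)/(al*PI)).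
  assert (HA : 0 <= A <= 1).
  { assert (Hap : 0 < al*PI) by (apply Rmult_lt_0_compat; lra).
    assert (Hs1 : sin (al*PI) < al*PI) by (apply sin_lt_x; lra).
    assert (Hs0 : 0 < sin (al*PI)) by (apply sin_gt_0; nra).
    unfold A. split. left; apply Rdiv_lt_0_compat; lra.
    apply (Rle_div_l (sin (al*PI)) 1 (al*PI)); lra. }
  assert (HI2 : 0 <= RInt_gen (fun t => exp (sqrt t) / sqrt t * exp (- c * t)) (at_point 1) (Rbar_locally p_infty)).
  { apply RInt_gen_nonneg_any. intros t Ht. apply Rmult_le_pos.
    apply Rle_mult_inv_pos. left; apply exp_pos. apply sqrt_lt_R0; lra. left; apply exp_pos. }
  assert (HI1 : RInt (fun t => t * exp (- c * t)) 0 1 = 1/c^2 - (1/c + 1/c^2)*exp(-c*1)).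
  { apply is_RInt_unique. apply (is_RInt_texp c 1 Hc0). }
  fold c. rewrite HI1.
  assert (Hsh : 0 < sqrt h) by (apply sqrt_lt_R0; lra).
  assert (HR : exp h / h^2 * (1/c^2 - (1/c + 1/c^2)*exp(-c*1)) * (300000 * exp (-T)) <=
     (exp h / h ^ 2 * (1/c^2 - (1/c + 1/c^2)*exp(-c*1)) +
      exp (sqrt h) / sqrt h * RInt_gen (fun t => exp (sqrt t) / sqrt t * exp (- c * t)) (at_point 1) (Rbar_locally p_infty))
     * (300000 * exp (- T))).
  { apply Rmult_le_compat_r. left; apply Rmult_lt_0_compat; [lra|apply exp_pos].
    assert (0 <= exp (sqrt h) / sqrt h) by (apply Rle_mult_inv_pos; [left; apply exp_pos|lra]).
    assert (0 <= exp (sqrt h) / sqrt h * RInt_gen (fun t => exp (sqrt t) / sqrt t * exp (- c * t)) (at_point 1) (Rbar_locally p_infty)) by (apply Rmult_le_pos; lra).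
    lra. }
  eapply Rle_trans; [|exact HR]. clear HR.
  assert (HF := final_ineq h c T Hh Hc6).
  eapply Rle_trans; [|exact HF]. clear HF.
  set (K := 2*(1/h + 9/(h*sqrt h))*exp(sqrt h + h/24 - T)).
  assert (HK : 0 <= K).
  { unfold K. apply Rmult_le_pos; [|left; apply exp_pos].
    assert (0 < 1/h) by (apply Rdiv_lt_0_compat; lra).
    assert (0 < 9/(h*sqrt h)) by (apply Rdiv_lt_0_compat; [lra|apply Rmult_lt_0_compat; lra]). lra. }
  assert (H2a : 0 <= 2*a) by (rewrite Ha; assert (0 < al*PI*L) by (apply Rmult_lt_0_compat; [apply Rmult_lt_0_compat|]; lra); lra).
  assert (Hc2 : 0 < c/2) by lra.
  assert (HRHS : 0 <= K / (c/2)^2) by (apply Rle_mult_inv_pos; [exact HK| apply pow_lt; lra]).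
  match goal with |- Cmod (RInt ?F 0 (2*a)) <= _ => set (FF := F) end.
  destruct (classic (ex_RInt (V:=C_R_CompleteNormedModule) FF 0 (2*a))) as [He|Hne].
  - assert (Hb := is_RInt_texp (c/2) (2*a) Hc2).
    assert (Hg := is_RInt_scal _ 0 (2*a) K _ Hb).
    assert (Hpt : forall t, 0 <= t <= 2*a -> @norm R_AbsRing (CompleteNormedModule.NormedModule R_AbsRing C_R_CompleteNormedModule) (FF t) <= scal K (t * exp (- (c/2) * t))).
    { intros t Ht. apply Rle_trans with (Cmod (FF t)). { rewrite Cmod_norm. apply Rle_refl. } rewrite Ha in Ht.
      pose proof (pw A x T al h L t c HA Hal Hx Hh eq_refl HL0 HaL HhL Ht Hc0 Hc4) as Hpw.
      exact Hpw. }
    assert (Hle := norm_RInt_le FF _ 0 (2*a) _ _ H2a Hpt (RInt_correct _ _ _ He) Hg).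
    rewrite Cmod_norm. eapply Rle_trans. exact Hle.
    change (scal K ?l) with (K * l).
    unfold Rdiv. apply Rmult_le_compat_l. exact HK.
    assert (0 <= (2*a / (c/2) + 1/(c/2)^2) * exp (- (c/2) * (2*a))).
    { apply Rmult_le_pos; [|left; apply exp_pos].
      assert (0 <= 2*a/(c/2)) by (apply Rle_mult_inv_pos; lra).
      assert (0 < 1/(c/2)^2) by (apply Rdiv_lt_0_compat; [lra|apply pow_lt; lra]). lra. }
    lra.
  - rewrite (RInt_C_nonex FF 0 (2*a) Hne). unfold Cmod. simpl.
    replace (0*(0*1) + 0*(0*1)) with 0 by ring. rewrite sqrt_0. exact HRHS.
Qed.
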